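(* Let $\Omega\subset\mathbb{R}^N$ be a bounded domain, $\lambda>0$, $\delta\in(0,1)$, $T>0$, $u_0\in L^2(\Omega)$. Define $g_\delta:\mathbb{R}\to\mathbb{R}$ by $g_\delta(s)=\frac{1}{1-s}$ for $s\le1-\delta$ and $g_\delta(s)=\delta^{-1}$ for $s>1-\delta$, and for $v\in L^2(\Omega)$ define \[ f_\delta(v)=\lambda\,\bigl(g_\delta(v)\bigr)^2\Bigl(1+\int_\Omega g_\delta(v)\,dx\Bigr)^{-2}. \] Let $M=\|u_0\|_{L^2}+1$ and \[ Y_M=\bigl\{u\in C([0,T];L^2(\Omega)):\ \|u\|_{L^\infty([0,T];L^2(\Omega))}\le M\bigr\}. \] Then $f_\delta$ is Lipschitz continuous on $Y_M$: there is a constant $L$ such that $\|f_\delta(u_1(t))-f_\delta(u_2(t))\|_{L^2(\Omega)}\le L\|u_1(t)-u_2(t)\|_{L^2(\Omega)}$ for all $u_1,u_2\in Y_M$ and $t\in[0,T]$. *)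

(* Defs.v *)
From HB Require Import structures.
From mathcomp Require Import all_boot all_order all_algebra.
From mathcomp Require Import all_classical all_reals all_analysis.
Import GRing.Theory Num.Theory numFieldNormedType.Exports.
Set Implicit Arguments.
Unset Strict Implicit.
Unset Printing Implicit Defensive.
Local Open Scope ring_scope.
Local Open Scope classical_set_scope.

Record mspace (R : realType) := MSpace {
  ms_disp : measure_display;
  ms_car : measurableType ms_disp;
  ms_meas : {measure set ms_car -> \bar R} }.
Arguments MSpace {R ms_disp ms_car}.
Arguments ms_meas {R}.
Arguments ms_car {R}.

(** R^n as the iterated product R * (R * ( ... * unit)) equipped with the
    product of n copies of the Lebesgue measure (and the Dirac measure on
    the one-point space unit). *)
Fixpoint RNspace (R : realType) (n : nat) : mspace R :=
  match n with
  | 0 => MSpace (\d_tt : {measure set unit -> \bar R})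
  | n.+1 => MSpace (((@lebesgue_measure R) \x^ ms_meas (RNspace R n))%E
      : {measure set (_ * ms_car (RNspace R n))%type -> \bar R})
  end.

Fixpoint RNcoords (R : realType) (n : nat) : ms_car (RNspace R n) -> seq R :=
  match n with
  | 0 => fun _ => [::]
  | n.+1 => fun p => p.1 :: RNcoords p.2
  end.

Definition to_rV (R : realType) (n : nat) (x : ms_car (RNspace R n)) : 'rV[R]_n :=
  \row_(i < n) nth 0 (RNcoords x) i.

Definition lebN (R : realType) (n : nat) := ms_meas (RNspace R n).

Definition setN (R : realType) (n : nat) (A : set 'rV[R]_n) : set (ms_car (RNspace R n)) :=
  @to_rV R n @^-1` A.

Definition intN (R : realType) (n : nat) (A : set 'rV[R]_n) (h : 'rV[R]_n -> \bar R) : \bar R :=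
  (\int[lebN R n]_(x in setN A) h (to_rV x))%E.

(** v belongs to L^2(A) (v is a representative of its class) *)
Definition L2 (R : realType) (n : nat) (A : set 'rV[R]_n) (v : 'rV[R]_n -> R) : Prop :=
  measurable_fun (setN A) (v \o @to_rV R n) /\
  (intN A (fun x => ((v x) ^+ 2)%:E) < +oo)%E.

Definition L2norm (R : realType) (n : nat) (A : set 'rV[R]_n) (v : 'rV[R]_n -> R) : R :=
  Num.sqrt (fine (intN A (fun x => ((v x) ^+ 2)%:E))).

Definition g_delta (R : realType) (delta : R) (s : R) : R :=
  if s <= 1 - delta then (1 - s)^-1 else delta^-1.

Definition f_delta (R : realType) (n : nat) (Omega : set 'rV[R]_n) (lambda delta : R)
    (v : 'rV[R]_n -> R) : 'rV[R]_n -> R :=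
  fun x => lambda * (g_delta delta (v x)) ^+ 2 *
    (1 + fine (intN Omega (fun y => (g_delta delta (v y))%:E))) ^- 2.

Definition C0TL2 (R : realType) (n : nat) (Omega : set 'rV[R]_n) (T : R)
    (u : R -> 'rV[R]_n -> R) : Prop :=
  (forall t, 0 <= t <= T -> L2 Omega (u t)) /\
  (forall t, 0 <= t <= T -> forall eps : R, 0 < eps -> exists eta : R, 0 < eta /\
     forall s, 0 <= s <= T -> `|s - t| < eta ->
       L2norm Omega (fun x => u s x - u t x) < eps).

(** Y_M = { u in C([0,T];L^2(Omega)) : ||u||_{L^infty(0,T;L^2(Omega))} <= M }.
    For u continuous in time, the L^infty-in-time norm is the sup over [0,T]. *)
Definition Y_M (R : realType) (n : nat) (Omega : set 'rV[R]_n) (T M : R)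
    (u : R -> 'rV[R]_n -> R) : Prop :=
  C0TL2 Omega T u /\ (forall t, 0 <= t <= T -> L2norm Omega (u t) <= M).

(* Main.v *)
Require Import Defs.
From HB Require Import structures.
From mathcomp Require Import all_boot all_order all_algebra.
From mathcomp Require Import all_classical all_reals all_analysis.
From mathcomp Require Import ring lra measurable_realfun.
Import GRing.Theory Num.Theory numFieldNormedType.Exports.
Import Order.TTheory.
Local Open Scope ring_scope.
Local Open Scope classical_set_scope.
Section A.
Variable R : realType.

Lemma g_max (delta s : R) : 0 < delta ->
  g_delta delta s = (Num.max (1 - s) delta)^-1.
Proof.
move=> d0; rewrite /g_delta; case: ifPn => h.
  by congr (_^-1); apply/esym/max_idPl; lra.
by congr (_^-1); apply/esym/max_idPr; rewrite -ltNge in h; lra.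
Qed.

Lemma g_bnd (delta s : R) : 0 < delta ->
  0 < g_delta delta s <= delta^-1.
Proof.
move=> d0; rewrite g_max // invr_gt0 lt_max d0 orbT /=.
by rewrite lef_pV2 ?posrE ?lt_max ?d0 ?orbT // le_max lexx orbT.
Qed.

Lemma inv_lip (A B delta : R) : 0 < delta -> delta <= A -> delta <= B ->
  `|A^-1 - B^-1| <= delta^-2 * `|A - B|.
Proof.
move=> d0 hA hB.
have A0 : 0 < A := lt_le_trans d0 hA.
have B0 : 0 < B := lt_le_trans d0 hB.
have -> : A^-1 - B^-1 = (B - A) / (A * B) by field; rewrite ?gt_eqF //.
rewrite normrM normfV distrC (gtr0_norm (mulr_gt0 A0 B0)) mulrC.
apply: ler_wpM2r => //.
rewrite lef_pV2 ?posrE ?exprn_gt0 ?mulr_gt0 //.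
by rewrite expr2 ler_pM // ltW.
Qed.

Lemma g_lip (delta s t : R) : 0 < delta ->
  `|g_delta delta s - g_delta delta t| <= delta^-2 * `|s - t|.
Proof.
move=> d0; rewrite !g_max //.
have hh := (@inv_lip (Num.max (1 - s) delta) (Num.max (1 - t) delta) delta d0).
rewrite !le_max !lexx !orbT in hh.
apply: le_trans (hh isT isT) _.
apply: ler_wpM2l; first by rewrite invr_ge0 exprn_ge0 // ltW.
have n1 := ler_norm (s - t); have n2 := ler_norm (t - s); rewrite distrC in n2.
have [h1|h1] := leP (1 - s) delta; have [h2|h2] := leP (1 - t) delta;
  rewrite ler_norml; apply/andP; split; lra.
Qed.
End A.
Section B.
Variable R : realType.

Lemma sq_le (U c : R) : `|U| <= c -> U ^+ 2 <= c ^+ 2.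
Proof.
move=> h; rewrite -real_normK ?num_real //.
by rewrite ler_pXn2r ?nnegrE // (le_trans _ h).
Qed.

Lemma abs_mul3_le (x y z a b c : R) : `|x| <= a -> `|y| <= b -> `|z| <= c ->
  `|x * y * z| <= a * b * c.
Proof.
move=> hx hy hz; rewrite !normrM.
by rewrite ler_pM ?mulr_ge0 ?ler_pM.
Qed.

Lemma pt_bound (lam d P Q A B h J : R) : 0 < lam -> 0 < d ->
  0 <= P <= d -> 0 <= Q <= d -> `|P - Q| <= d ^+ 2 * `|h| ->
  0 <= A -> 0 <= B -> `|A - B| <= J ->
  (lam * P ^+ 2 * (1 + A) ^- 2 - lam * Q ^+ 2 * (1 + B) ^- 2) ^+ 2
    <= 8 * lam ^+ 2 * d ^+ 6 * h ^+ 2 + 8 * lam ^+ 2 * d ^+ 4 * J ^+ 2.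
Proof.
move=> l0 d0 /andP[P0 Pd] /andP[Q0 Qd] hPQ A0 B0 hJ.
set a := (1 + A)^-1; set b := (1 + B)^-1.
have a0 : 0 <= a by rewrite invr_ge0; lra.
have b0 : 0 <= b by rewrite invr_ge0; lra.
have a1 : a <= 1 by rewrite invr_le1 ?unitf_gt0; lra.
have b1 : b <= 1 by rewrite invr_le1 ?unitf_gt0; lra.
have hab : `|a - b| <= J.
  have := @inv_lip R (1 + A) (1 + B) 1 ltr01; rewrite expr1n invr1 mul1r.
  have -> : 1 + A - (1 + B) = A - B by ring.
  move=> H; apply: le_trans (H _ _) hJ; lra.
have -> : (1 + A) ^- 2 = a ^+ 2 by rewrite exprVn.
have -> : (1 + B) ^- 2 = b ^+ 2 by rewrite exprVn.
set U := (P - Q) * (P + Q) * a ^+ 2.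
set V := Q ^+ 2 * (a - b) * (a + b).
have -> : lam * P ^+ 2 * a ^+ 2 - lam * Q ^+ 2 * b ^+ 2 = lam * (U + V)
  by rewrite /U /V; ring.
have hU : `|U| <= d ^+ 2 * `|h| * (2 * d) * 1.
  apply: abs_mul3_le => //.
    by rewrite ger0_norm; lra.
  by rewrite normrX ger0_norm // expr_le1.
have hV : `|V| <= d ^+ 2 * J * 2.
  apply: abs_mul3_le => //.
    by rewrite normrX ger0_norm // ler_pXn2r ?nnegrE // ltW.
  by rewrite ger0_norm; lra.
have U2 := sq_le _ _ hU; have V2 := sq_le _ _ hV.
have hUV : (U + V) ^+ 2 <= 2 * (U ^+ 2 + V ^+ 2).
  have := sqr_ge0 (U - V); rewrite !expr2; lra.
rewrite exprMn.
have l2 : 0 <= lam ^+ 2 by exact: sqr_ge0.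
apply: le_trans (ler_wpM2l l2 hUV) _.
have E1 : (d ^+ 2 * `|h| * (2 * d) * 1) ^+ 2 = 4 * d ^+ 6 * h ^+ 2.
  by rewrite -[h ^+ 2]real_normK ?num_real //; ring.
have E2 : (d ^+ 2 * J * 2) ^+ 2 = 4 * d ^+ 4 * J ^+ 2 by ring.
rewrite E1 E2 in U2 V2.
have -> : 8 * lam ^+ 2 * d ^+ 6 * h ^+ 2 + 8 * lam ^+ 2 * d ^+ 4 * J ^+ 2
  = lam ^+ 2 * (2 * (4 * d ^+ 6 * h ^+ 2 + 4 * d ^+ 4 * J ^+ 2)) by ring.
apply: ler_wpM2l => //; lra.
Qed.
End B.
Section C.
Variable R : realType.

Lemma g_cont (delta : R) : 0 < delta -> continuous (g_delta delta).
Proof.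
move=> d0 x; apply/cvgrPdist_lt => e e0.
apply/nbhs_ballP; exists (e * delta ^+ 2).
  by rewrite /= mulr_gt0 // exprn_gt0.
move=> y /= xy.
apply: le_lt_trans (@g_lip R delta x y d0) _.
rewrite -(ltr_pM2l (exprn_gt0 2 d0)) mulrA mulrV ?mul1r ?unitfE ?expf_neq0 ?gt_eqF //.
by rewrite mulrC.
Qed.

Lemma g_meas (delta : R) : 0 < delta -> measurable_fun setT (g_delta delta).
Proof. by move=> d0; apply: continuous_measurable_fun; exact: g_cont. Qed.
End C.
Section D.
Local Open Scope ereal_scope.
Context d (T : measurableType d) (R : realType) (mu : {measure set T -> \bar R}).
Variables (D : set T) (mD : measurable D) (muD : mu D < +oo).

Lemma fin_of_le (E : \bar R) (r : R) : 0 <= E -> E <= r%:E -> E \is a fin_num.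
Proof.
by case: E => [e| |] //=.
Qed.

Lemma fine_le_of (E : \bar R) (r : R) : 0 <= E -> E <= r%:E -> (fine E <= r)%R.
Proof.
by case: E => [e| |] //=; rewrite lee_fin.
Qed.

Lemma mEF (f : T -> R) : measurable_fun D f -> measurable_fun D (fun x => (f x)%:E).
Proof. by move/measurable_EFinP. Qed.

Lemma int_sq_fin (a b : T -> R) : measurable_fun D a -> measurable_fun D b ->
  \int[mu]_(x in D) ((a x) ^+ 2)%:E < +oo ->
  \int[mu]_(x in D) ((b x) ^+ 2)%:E < +oo ->
  \int[mu]_(x in D) ((a x - b x) ^+ 2)%:E < +oo.
Proof.
move=> ma mb ia ib.
apply: le_lt_trans (_ : _ <= \int[mu]_(x in D) (2%:E * ((a x) ^+ 2)%:E + 2%:E * ((b x) ^+ 2)%:E)) _.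
  apply: ge0_le_integral => //.
  - by move=> x _; rewrite lee_fin sqr_ge0.
  - by apply: mEF; apply: measurable_funX; apply: measurable_funB.
  - apply: emeasurable_funD; apply: measurable_funeM; apply: mEF; exact: measurable_funX.
  - move=> x _; rewrite -!EFinM -EFinD lee_fin.
    have := sqr_ge0 (a x + b x); rewrite !expr2; lra.
rewrite ge0_integralD //; first last.
- by apply: measurable_funeM; apply: mEF; exact: measurable_funX.
- by move=> x _; rewrite mule_ge0 // lee_fin sqr_ge0.
- by apply: measurable_funeM; apply: mEF; exact: measurable_funX.
- by move=> x _; rewrite mule_ge0 // lee_fin sqr_ge0.
rewrite !ge0_integralZl //; first last.
- by move=> x _; rewrite lee_fin sqr_ge0.
- by apply: mEF; exact: measurable_funX.
- by move=> x _; rewrite lee_fin sqr_ge0.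
- by apply: mEF; exact: measurable_funX.
by rewrite lte_add_pinfty // lte_mul_pinfty.
Qed.

Lemma int_cst' (r : R) : \int[mu]_(x in D) r%:E = r%:E * mu D.
Proof. exact: (integral_cst mu mD r%:E). Qed.

Lemma int_abs_bound (h : T -> R) (K m : R) : measurable_fun D h ->
  \int[mu]_(x in D) (h x ^+ 2)%:E = K%:E -> mu D = m%:E ->
  exists X : R, \int[mu]_(x in D) (`|h x|)%:E = X%:E /\
     (X ^+ 2 <= (m + 1) * K)%R /\ (0 <= X)%R.
Proof.
move=> mh hK hm.
have m0 : (0 <= m)%R by rewrite -lee_fin -hm measure_ge0.
have K0 : (0 <= K)%R.
  by rewrite -lee_fin -hK; apply: integral_ge0 => x _; rewrite lee_fin sqr_ge0.
have mah : measurable_fun D (fun x => (`|h x|)%:E).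
  by apply: mEF; apply: measurableT_comp => //.
have key (c : R) : (0 <= c)%R ->
    (2 * c)%:E * \int[mu]_(x in D) (`|h x|)%:E <= (K + c ^+ 2 * m)%:E.
  move=> c0; rewrite -ge0_integralZl //; try (by move=> x _; rewrite lee_fin);
    try (by rewrite lee_fin mulr_ge0).
  apply: le_trans (_ : _ <= \int[mu]_(x in D) ((h x ^+ 2)%:E + (c ^+ 2)%:E)) _.
    apply: ge0_le_integral => //.
    - by move=> x _; rewrite mule_ge0 // lee_fin ?mulr_ge0.
    - exact: measurable_funeM.
    - apply: emeasurable_funD; first by apply: mEF; exact: measurable_funX.
      exact: (measurable_cst (T1:=T) (c ^+ 2)%:E).
    - move=> x _; rewrite -EFinM -EFinD lee_fin.
      have := sqr_ge0 (`|h x| - c); rewrite -[(h x ^+ 2)%R]real_normK ?num_real //.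
      rewrite !expr2; lra.
  rewrite ge0_integralD //; try (by move=> x _; rewrite lee_fin sqr_ge0);
    try (by apply: mEF; exact: measurable_funX).
  by rewrite hK int_cst' hm -EFinM -EFinD.
have X0 : 0 <= \int[mu]_(x in D) (`|h x|)%:E.
  by apply: integral_ge0 => x _; rewrite lee_fin.
have [X hX] : exists X, \int[mu]_(x in D) (`|h x|)%:E = X%:E.
  move: X0 (key 1%R ler01); case: (\int[mu]_(x in D) (`|h x|)%:E) => [X| |] //= X0.
    by exists X.
  by rewrite mulry gtr0_sg ?mulr_gt0 // mul1e.
rewrite hX in X0 key.
exists X; split => //; split; last by rewrite -lee_fin.
rewrite lee_fin in X0.
have := key (X / (m + 1))%R; rewrite -EFinM lee_fin => /(_ (divr_ge0 X0 _)).
move=> /(_ (addr_ge0 m0 ler01)) H.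
have m1 : (0 < m + 1)%R by lra.
set c := (X / (m + 1))%R in H.
have Xc : X = (c * (m + 1))%R by rewrite /c divfK // gt_eqF.
rewrite Xc in H *.
have : (0 <= c)%R by rewrite /c divr_ge0 // ltW.
nra.
Qed.

Lemma g_integrable (del m : R) (a : T -> R) : (0 < del)%R -> measurable_fun D a ->
  mu D = m%:E -> mu.-integrable D (fun x => (g_delta del (a x))%:E).
Proof.
move=> d0 ma hm; apply/integrableP; split.
  by apply: mEF; apply: measurableT_comp ma; exact: g_meas.
apply: le_lt_trans (_ : _ <= \int[mu]_(x in D) (del^-1)%:E) _.
  apply: ge0_le_integral => //.
  - by apply: measurableT_comp => //; apply: mEF; apply: measurableT_comp ma; exact: g_meas.
  - move=> x _ /=; rewrite lee_fin ger0_norm.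
      by have /andP[] := @g_bnd R del (a x) d0.
    by have /andP[/ltW] := @g_bnd R del (a x) d0.
by rewrite int_cst' hm -EFinM ltry.
Qed.

Lemma J_bound (del m X : R) (a b : T -> R) : (0 < del)%R ->
  measurable_fun D a -> measurable_fun D b -> mu D = m%:E ->
  \int[mu]_(x in D) (`|a x - b x|)%:E = X%:E ->
  (`|fine (\int[mu]_(x in D) (g_delta del (a x))%:E) -
     fine (\int[mu]_(x in D) (g_delta del (b x))%:E)| <= del ^- 2 * X)%R.
Proof.
move=> d0 ma mb hm hX.
have ia := @g_integrable del m a d0 ma hm; have ib := @g_integrable del m b d0 mb hm.
have fa := integrable_fin_num mD ia; have fb := integrable_fin_num mD ib.
rewrite -lee_fin -(fineK fa) -(fineK fb) !fineK //.
have -> : (`|fine (\int[mu]_(x in D) (g_delta del (a x))%:E) -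
     fine (\int[mu]_(x in D) (g_delta del (b x))%:E)|)%:E =
     `|\int[mu]_(x in D) (g_delta del (a x))%:E - \int[mu]_(x in D) (g_delta del (b x))%:E|.
  by rewrite -[in RHS](fineK fa) -[in RHS](fineK fb).
rewrite -integralB //.
apply: le_trans (le_abse_integral _ mD _) _.
  by apply: emeasurable_funB; apply: mEF; apply: measurableT_comp; try exact: g_meas.
apply: le_trans (_ : _ <= \int[mu]_(x in D) ((del ^- 2)%:E * (`|a x - b x|)%:E)) _.
  apply: ge0_le_integral => //.
  - apply: measurableT_comp => //.
    by apply: emeasurable_funB; apply: mEF; apply: measurableT_comp; try exact: g_meas.
  - apply: measurable_funeM; apply: mEF; apply: measurableT_comp => //.
    exact: measurable_funB.
  - move=> x _ /=; rewrite -EFinM lee_fin; exact: g_lip.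
rewrite ge0_integralZl //; try (by rewrite hX -EFinM);
  try (by apply: mEF; apply: measurableT_comp => //; exact: measurable_funB);
  try (by move=> x _; rewrite lee_fin);
  try (by rewrite lee_fin invr_ge0 exprn_ge0 // ltW).
Qed.

Lemma main_gen (lam del : R) (a b : T -> R) : (0 < lam)%R -> (0 < del)%R ->
  measurable_fun D a -> measurable_fun D b ->
  \int[mu]_(x in D) ((a x) ^+ 2)%:E < +oo ->
  \int[mu]_(x in D) ((b x) ^+ 2)%:E < +oo ->
  (Num.sqrt (fine (\int[mu]_(x in D)
     ((lam * g_delta del (a x) ^+ 2 *
        (1 + fine (\int[mu]_(y in D) (g_delta del (a y))%:E)) ^- 2 -
       lam * g_delta del (b x) ^+ 2 *
        (1 + fine (\int[mu]_(y in D) (g_delta del (b y))%:E)) ^- 2) ^+ 2)%:E))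
  <= Num.sqrt (8 * lam ^+ 2 * del^-1 ^+ 6 + 8 * lam ^+ 2 * del^-1 ^+ 8 *
                 (fine (mu D)) * (fine (mu D) + 1)) *
     Num.sqrt (fine (\int[mu]_(x in D) ((a x - b x) ^+ 2)%:E)))%R.
Proof.
move=> l0 d0 ma mb ia ib.
set m := fine (mu D).
have hm : mu D = m%:E by rewrite /m fineK // ge0_fin_numE // measure_ge0.
have m0 : (0 <= m)%R by rewrite -lee_fin -hm measure_ge0.
have mh : measurable_fun D (fun x => a x - b x)%R by exact: measurable_funB.
have ih := @int_sq_fin a b ma mb ia ib.
have K0' : 0 <= \int[mu]_(x in D) ((a x - b x) ^+ 2)%:E.
  by apply: integral_ge0 => x _; rewrite lee_fin sqr_ge0.
set K := fine (\int[mu]_(x in D) ((a x - b x) ^+ 2)%:E).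
have hK : \int[mu]_(x in D) ((a x - b x) ^+ 2)%:E = K%:E.
  by rewrite /K fineK // ge0_fin_numE.
have K0 : (0 <= K)%R by rewrite -lee_fin -hK.
have [X [hX [X2 X0]]] := @int_abs_bound (fun x => a x - b x)%R K m mh hK hm.
set Ia := fine (\int[mu]_(y in D) (g_delta del (a y))%:E).
set Ib := fine (\int[mu]_(y in D) (g_delta del (b y))%:E).
have hJ : (`|Ia - Ib| <= del ^- 2 * X)%R := @J_bound del m X a b d0 ma mb hm hX.
have Ia0 : (0 <= Ia)%R.
  by apply: fine_ge0; apply: integral_ge0 => x _; rewrite lee_fin; have /andP[/ltW] := @g_bnd R del (a x) d0.
have Ib0 : (0 <= Ib)%R.
  by apply: fine_ge0; apply: integral_ge0 => x _; rewrite lee_fin; have /andP[/ltW] := @g_bnd R del (b x) d0.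
set dd := (del^-1)%R.
have dd0 : (0 < dd)%R by rewrite /dd invr_gt0.
have edd : (del ^- 2 = dd ^+ 2)%R by rewrite /dd exprVn.
rewrite edd in hJ.
set J := (dd ^+ 2 * X)%R in hJ.
set c1 := (8 * lam ^+ 2 * dd ^+ 6)%R.
set c2 := (8 * lam ^+ 2 * dd ^+ 4 * J ^+ 2)%R.
have c10 : (0 <= c1)%R by rewrite /c1 !mulr_ge0 // ?exprn_ge0 // ltW.
have c20 : (0 <= c2)%R by rewrite /c2 !mulr_ge0 // ?exprn_ge0 // ?sqr_ge0 // ltW.
have mF : measurable_fun D (fun x => (lam * g_delta del (a x) ^+ 2 * (1 + Ia) ^- 2 -
       lam * g_delta del (b x) ^+ 2 * (1 + Ib) ^- 2) ^+ 2)%R.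
  apply: measurable_funX; apply: measurable_funB.
    apply: measurable_funM => //; apply: measurable_funM => //.
    by apply: measurable_funX; apply: measurableT_comp ma; exact: g_meas.
  apply: measurable_funM => //; apply: measurable_funM => //.
  by apply: measurable_funX; apply: measurableT_comp mb; exact: g_meas.
have E_le : \int[mu]_(x in D) ((lam * g_delta del (a x) ^+ 2 * (1 + Ia) ^- 2 -
       lam * g_delta del (b x) ^+ 2 * (1 + Ib) ^- 2) ^+ 2)%:E <= (c1 * K + c2 * m)%:E.
  apply: le_trans (_ : _ <= \int[mu]_(x in D) (c1%:E * ((a x - b x) ^+ 2)%:E + c2%:E)) _.
    apply: ge0_le_integral => //.
    - by move=> x _; rewrite lee_fin sqr_ge0.
    - exact: mEF.
    - apply: emeasurable_funD => //; apply: measurable_funeM; apply: mEF.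
      exact: measurable_funX.
    - move=> x _; rewrite -EFinM -EFinD lee_fin.
      apply: pt_bound => //.
      + by have /andP[/ltW -> ] := @g_bnd R del (a x) d0.
      + by have /andP[/ltW -> ] := @g_bnd R del (b x) d0.
      + by rewrite -edd; exact: g_lip.
  rewrite ge0_integralD //; try (by move=> x _; rewrite lee_fin);
    try (by move=> x _; rewrite mule_ge0 // lee_fin sqr_ge0);
    try (by apply: measurable_funeM; apply: mEF; exact: measurable_funX).
  rewrite ge0_integralZl //; try (by move=> x _; rewrite lee_fin sqr_ge0);
    try (by apply: mEF; exact: measurable_funX).
  by rewrite hK int_cst' hm -!EFinM -EFinD.
have E0 : 0 <= \int[mu]_(x in D) ((lam * g_delta del (a x) ^+ 2 * (1 + Ia) ^- 2 -
       lam * g_delta del (b x) ^+ 2 * (1 + Ib) ^- 2) ^+ 2)%:E.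
  by apply: integral_ge0 => x _; rewrite lee_fin sqr_ge0.
have := @fine_le_of _ _ E0 E_le.
set E := fine _ => HE.
rewrite -sqrtrM; last first.
  by rewrite addr_ge0 // !mulr_ge0 // ?exprn_ge0 // ?addr_ge0 // ltW.
apply: ler_wsqrtr; apply: le_trans HE _.
have J2 : (J ^+ 2 <= dd ^+ 4 * ((m + 1) * K))%R.
  rewrite /J exprMn -exprM; apply: ler_wpM2l; first by rewrite exprn_ge0 // ltW.
  exact: X2.
rewrite /c2 /c1.
have : (0 <= 8 * lam ^+ 2 * dd ^+ 4 * m)%R by rewrite !mulr_ge0 // ?exprn_ge0 // ltW.
move: J2; set P := (8 * lam ^+ 2 * dd ^+ 4 * m)%R => J2 P0.
have -> : (8 * lam ^+ 2 * dd ^+ 4 * J ^+ 2 * m = P * J ^+ 2)%R by rewrite /P; ring.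
have -> : ((8 * lam ^+ 2 * dd ^+ 6 + 8 * lam ^+ 2 * dd ^+ 8 * m * (m + 1)) * K =
   8 * lam ^+ 2 * dd ^+ 6 * K + P * (dd ^+ 4 * ((m + 1) * K)))%R by rewrite /P; ring.
by rewrite lerD2l; apply: ler_wpM2l.
Qed.
End D.
Section E.
Variable R : realType.

Fixpoint boxset (n : nat) (P : nat -> set R) : set (ms_car (RNspace R n)) :=
  match n return set (ms_car (RNspace R n)) with
  | 0 => setT
  | n'.+1 => (P 0%N) `*` boxset n' (fun i => P i.+1)
  end.

Lemma boxsetE n P p : boxset n P p <-> forall i, (i < n)%N -> P i (nth 0 (RNcoords p) i).
Proof.
elim: n P p => [|n IH] P p /=; first by split.
split.
  by move=> [h0 h1] [|i] ltin //=; apply: (proj1 (IH _ _) h1).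
move=> h1; split; first exact: (h1 0%N).
by apply/IH => i lt; apply: (h1 i.+1).
Qed.

Lemma boxset_meas n P : (forall i, measurable (P i)) -> measurable (boxset n P).
Proof.
elim: n P => [|n IH] P mP /=; first exact: measurableT.
apply: measurableX; [exact: mP | exact: IH].
Qed.

Lemma boxset_fin n P : (forall i, measurable (P i)) ->
  (forall i, (lebesgue_measure (P i) < +oo)%E) -> (lebN R n (boxset n P) < +oo)%E.
Proof.
elim: n P => [|n IH] P mP fP /=.
  by rewrite /lebN /= diracT ltry.
rewrite /lebN /=.
rewrite (@product_measure2E _ _ _ _ R lebesgue_measure (ms_meas (RNspace R n))); first last.
- by apply: boxset_meas => i; exact: mP.
- exact: mP.
apply: lte_mul_pinfty.
- exact: measure_ge0.
- by rewrite ge0_fin_numE ?measure_ge0 //; exact: fP.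
- apply: IH => i; [exact: mP | exact: fP].
Qed.
End E.
Section F.
Variable R : realType.

Lemma seq_choice (n : nat) (P : nat -> rat -> Prop) :
  (forall i, (i < n)%N -> exists q, P i q) ->
  exists s : seq rat, forall i, (i < n)%N -> P i (nth 0 s i).
Proof.
elim: n P => [|n IH] P h; first by exists [::].
have [q0 hq0] := h 0%N isT.
have [s hs] := IH (fun i => P i.+1) (fun i lt => h i.+1 lt).
by exists (q0 :: s) => -[|i] //= lt; exact: hs.
Qed.

Definition boxQ (n : nat) (s : seq rat) (r : rat) :=
  @boxset R n (fun i => [set` Interval (BRight (ratr (nth 0 s i) - ratr r : R))
                                     (BLeft (ratr (nth 0 s i) + ratr r))]).

Lemma boxQ_meas n s r : measurable (boxQ n s r).
Proof. by apply: (@boxset_meas R) => i; exact: measurable_itv. Qed.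

Lemma ballR (a b e : R) : `|a - b| < e -> ball a e b.
Proof. by []. Qed.

Lemma setN_meas (n : nat) (Omega : set 'rV[R]_n) : open Omega ->
  measurable (setN Omega).
Proof.
move=> oO.
pose F k : set (ms_car (RNspace R n)) :=
  if (unpickle k : option (seq rat * rat)) is Some sr then
    (if `[< boxQ n sr.1 sr.2 `<=` setN Omega >] then boxQ n sr.1 sr.2 else set0)
  else set0.
rewrite (_ : setN Omega = \bigcup_k F k).
  apply: (@bigcupT_measurable _ _ F) => k; rewrite /F.
  case: (unpickle k) => [[s r]|] //=.
  by case: asboolP => _ //; exact: boxQ_meas.
apply/seteqP; split; last first.
  move=> p [k _]; rewrite /F.
  case: (unpickle k) => [[s r]|] //=.
  by case: asboolP => // H /H.
move=> p Hp.
have := oO _ Hp; rewrite /interior /= => /nbhs_ballP [e e0 He].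
have e4 : (e / 4 < e / 2)%R by rewrite ltr_pM2l // ltf_pV2 ?posrE //; lra.
have [r /andP[r1 r2]] : exists r : rat, (e / 4 < ratr r)%R && (ratr r < e / 2)%R.
  by have [r] := rat_in_itvoo e4; rewrite in_itv /=; exists r.
have [s hs] : exists s : seq rat, forall i, (i < n)%N ->
    (`|ratr (nth 0 s i) - nth 0 (RNcoords p) i| < e / 4)%R.
  apply: (@seq_choice n (fun i q => (`|ratr q - nth 0 (RNcoords p) i| < e / 4)%R)) => i _.
  set c := nth 0 (RNcoords p) i.
  have : (c - e / 4 < c + e / 4)%R by rewrite ltrD2l; lra.
  move=> /rat_in_itvoo [q]; rewrite in_itv /= => /andP[q1 q2].
  by exists q; rewrite ltr_norml; apply/andP; split; lra.
exists (pickle (s, r)) => //.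
rewrite /F pickleK /=.
case: asboolP => H.
  apply/boxsetE => i lt /=; rewrite in_itv /=.
  have := hs i lt; rewrite ltr_norml => /andP[h1 h2].
  apply/andP; split; lra.
exfalso; apply: H => p' /boxsetE Hp'.
apply: He; rewrite /ball /=; split => // i j.
apply: ballR; rewrite !mxE.
have := Hp' j (ltn_ord j); rewrite /= in_itv /= => /andP[h1 h2].
have := hs j (ltn_ord j); rewrite ltr_norml => /andP[h3 h4].
rewrite ltr_norml; apply/andP; split; lra.
Qed.

Lemma setN_fin (n : nat) (Omega : set 'rV[R]_n) : open Omega -> bounded_set Omega ->
  (lebN R n (setN Omega) < +oo)%E.
Proof.
move=> oO bO.
case: bO => M [_ HM].
have {HM}HB : forall x, Omega x -> (`|x| <= M + 1)%R.
  by move=> x Ox; apply: (HM (M + 1)%R) => //; rewrite ltrDl.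
set B := (M + 2)%R.
pose I := fun _ : nat => [set` Interval (BRight (- B)) (BLeft B)].
have sub : setN Omega `<=` @boxset R n I.
  move=> p Hp; apply/boxsetE => i lt; rewrite /I /= in_itv /=.
  have hb : ball (0 : 'rV[R]_n) B (to_rV p).
    rewrite mx_norm_ball /ball_ /= sub0r normrN.
    by apply: le_lt_trans (HB _ Hp) _; rewrite /B ltrD2l; lra.
  move: hb; rewrite /ball /= => -[_ /(_ ord0 (Ordinal lt))].
  rewrite /ball /= !mxE /= sub0r normrN ltr_norml => /andP[h1 h2].
  by apply/andP; split.
apply: le_lt_trans (_ : _ <= lebN R n (@boxset R n I))%E _.
  apply: le_measure => //; rewrite inE.
  - exact: setN_meas.
  - by apply: (@boxset_meas R) => i; exact: measurable_itv.
apply: (@boxset_fin R) => i.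
- exact: measurable_itv.
- by rewrite lebesgue_measure_itv /=; case: ifP => _; rewrite ?ltry.
Qed.
End F.

Theorem lemma3p1 (R : realType) (N : nat) (Omega : set 'rV[R]_N)
    (lambda delta T : R) (u0 : 'rV[R]_N -> R) :
  open Omega -> connected Omega -> bounded_set Omega -> Omega !=set0 ->
  0 < lambda -> 0 < delta < 1 -> 0 < T ->
  L2 Omega u0 ->
  let M := L2norm Omega u0 + 1 in
  exists L : R, forall u1 u2 : R -> 'rV[R]_N -> R,
    Y_M Omega T M u1 -> Y_M Omega T M u2 ->
    forall t, 0 <= t <= T ->
      L2norm Omega (fun x => f_delta Omega lambda delta (u1 t) x
                             - f_delta Omega lambda delta (u2 t) x)
        <= L * L2norm Omega (fun x => u1 t x - u2 t x).
Proof.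
move=> oO _ bO _ l0 /andP[d0 _] _ _ M.
set m := fine (lebN R N (setN Omega)).
exists (Num.sqrt (8 * lambda ^+ 2 * delta^-1 ^+ 6 +
   8 * lambda ^+ 2 * delta^-1 ^+ 8 * m * (m + 1))).
move=> u1 u2 [[L1 _] _] [[L2' _] _] t ht.
have [mu1 iu1] := L1 t ht; have [mu2 iu2] := L2' t ht.
rewrite /L2norm /intN /f_delta.
exact: (@main_gen _ _ _ (lebN R N) (setN Omega) (@setN_meas R N Omega oO)
  (@setN_fin R N Omega oO bO) lambda delta (u1 t \o @to_rV R N) (u2 t \o @to_rV R N)
  l0 d0 mu1 mu2 iu1 iu2).
Qed.
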